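(* Let $n\ge3$, let $H$ be a non-trivial finitely generated abelian group, let $G$ be a group with a surjective homomorphism $\sigma\colon G\to S_n$, and let $W=H\wr_\sigma G=H^n\rtimes_\sigma G$. Assume that every abelian normal subgroup of $W$ is contained in $H^n$. If $G$ has the $R_\infty$-property, then $W$ has the $R_\infty$-property.
   Context: $H\wr_\sigma G=H^n\rtimes_\sigma G$ is the semidirect product in which $G$ acts on $H^n$ by permuting coordinates through $\sigma$: $g\cdot(h_1,\dots,h_n)=(h_{\sigma(g)(1)},\dots,h_{\sigma(g)(n)})$ (with the composition convention in $S_n$ making this a left action); $H^n$ is identified with $\{(\mathbf h,1)\}$. For an automorphism $\varphi$ of a group $X$, elements $x,y\in X$ are $\varphi$-twisted conjugate if $x=zy\varphi(z)^{-1}$ for some $z\in X$; the number of equivalence classes is the Reidemeister number $R(\varphi)\in\mathbb N\cup\{\infty\}$. $X$ has the $R_\infty$-property if $R(\varphi)=\infty$ for every $\varphi\in\mathrm{Aut}(X)$. *)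

(* Defs.v *)
From Stdlib Require List.
From mathcomp Require Import all_boot all_fingroup.
Set Implicit Arguments. Unset Strict Implicit. Unset Printing Implicit Defensive.

Definition is_group (T : Type) (mul : T -> T -> T) (one : T) (inv : T -> T) : Prop :=
  (forall x y z, mul x (mul y z) = mul (mul x y) z) /\
  (forall x, mul one x = x) /\ (forall x, mul x one = x) /\
  (forall x, mul (inv x) x = one) /\ (forall x, mul x (inv x) = one).

Definition is_abelian (T : Type) (mul : T -> T -> T) : Prop :=
  forall x y, mul x y = mul y x.

Inductive gen_by (T : Type) (mul : T -> T -> T) (one : T) (inv : T -> T)
    (l : list T) : T -> Prop :=
  | gen_base x : List.In x l -> gen_by mul one inv l x
  | gen_one : gen_by mul one inv l one
  | gen_mul x y : gen_by mul one inv l x -> gen_by mul one inv l y ->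
      gen_by mul one inv l (mul x y)
  | gen_inv x : gen_by mul one inv l x -> gen_by mul one inv l (inv x).

Definition fin_generated (T : Type) (mul : T -> T -> T) (one : T) (inv : T -> T) : Prop :=
  exists l : list T, forall x, gen_by mul one inv l x.

Definition is_automorphism (T : Type) (mul : T -> T -> T) (phi : T -> T) : Prop :=
  (forall x y, phi (mul x y) = mul (phi x) (phi y)) /\
  (forall y, exists x, phi x = y) /\ (forall x y, phi x = phi y -> x = y).

Definition twisted_conj (T : Type) (mul : T -> T -> T) (inv : T -> T)
    (phi : T -> T) (x y : T) : Prop :=
  exists z, x = mul (mul z y) (inv (phi z)).

Definition reidemeister_infinite (T : Type) (mul : T -> T -> T) (inv : T -> T)
    (phi : T -> T) : Prop :=
  ~ exists l : list T, forall x, exists2 y, List.In y l & twisted_conj mul inv phi x y.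

Definition R_infty (T : Type) (mul : T -> T -> T) (inv : T -> T) : Prop :=
  forall phi, is_automorphism mul phi -> reidemeister_infinite mul inv phi.

(* Permutational wreath product H wr_sigma G = H^n x| G.
   Left action: g . h = (i |-> h (sigma g i)); with MathComp's convention
   (s * t) i = t (s i), this is a left action for sigma a homomorphism. *)
Section Wreath.
Variables (n : nat) (H G : Type).
Variables (mulH : H -> H -> H) (oneH : H) (invH : H -> H).
Variables (mulG : G -> G -> G) (oneG : G) (invG : G -> G).
Variable sigma : G -> 'S_n.

Definition wact (g : G) (h : 'I_n -> H) : 'I_n -> H := fun i => h (sigma g i).

Definition wr_mul (a b : ('I_n -> H) * G) : ('I_n -> H) * G :=
  (fun i => mulH (a.1 i) (wact a.2 b.1 i), mulG a.2 b.2).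

Definition wr_one : ('I_n -> H) * G := (fun _ => oneH, oneG).

Definition wr_inv (a : ('I_n -> H) * G) : ('I_n -> H) * G :=
  (wact (invG a.2) (fun i => invH (a.1 i)), invG a.2).

Definition wr_abelian_normal (S : ('I_n -> H) * G -> Prop) : Prop :=
  S wr_one /\
  (forall x y, S x -> S y -> S (wr_mul x y)) /\
  (forall x, S x -> S (wr_inv x)) /\
  (forall x w, S x -> S (wr_mul (wr_mul w x) (wr_inv w))) /\
  (forall x y, S x -> S y -> wr_mul x y = wr_mul y x).
End Wreath.

(* Main.v *)
Require Import Defs.
From mathcomp Require Import all_boot all_fingroup.
From Stdlib Require Import FunctionalExtensionality.

Section AbsGroup.
Variables (T : Type) (mul : T -> T -> T) (one : T) (inv : T -> T).
Hypothesis hG : is_group mul one inv.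

Lemma ag_inv_unique x y : mul x y = one -> y = inv x.
Proof.
case: hG => A [L1 [R1 [LV RV]]] => h.
by rewrite -[y]L1 -(LV x) -A h R1.
Qed.

Lemma ag_eq_of x y : mul x (inv y) = one -> x = y.
Proof.
case: hG => A [L1 [R1 [LV RV]]] => h.
by rewrite -[x]R1 -(LV y) A h L1.
Qed.

Lemma ag_inv1 : inv one = one.
Proof.
case: hG => A [L1 [R1 [LV RV]]].
by symmetry; apply: ag_inv_unique; rewrite L1.
Qed.

Lemma ag_hom1 (f : T -> T) : (forall x y, f (mul x y) = mul (f x) (f y)) ->
  f one = one.
Proof.
move=> hf; case: hG => A [L1 [R1 [LV RV]]].
have e : f one = mul (f one) (f one) by rewrite -hf L1.
have e2 : mul (inv (f one)) (f one) = mul (inv (f one)) (mul (f one) (f one)) by rewrite -e.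
by rewrite A LV L1 in e2.
Qed.

Lemma ag_homV (f : T -> T) : (forall x y, f (mul x y) = mul (f x) (f y)) ->
  forall x, f (inv x) = inv (f x).
Proof.
move=> hf x; apply: ag_inv_unique.
case: hG => A [L1 [R1 [LV RV]]].
by rewrite -hf RV ag_hom1.
Qed.
End AbsGroup.

Theorem theorem3p13 (n : nat) (H G : Type)
  (mulH : H -> H -> H) (oneH : H) (invH : H -> H)
  (mulG : G -> G -> G) (oneG : G) (invG : G -> G)
  (sigma : G -> 'S_n) :
  3 <= n ->
  is_group mulH oneH invH -> is_abelian mulH ->
  fin_generated mulH oneH invH -> (exists h : H, h <> oneH) ->
  is_group mulG oneG invG ->
  (forall a b, sigma (mulG a b) = (sigma a * sigma b)%g) ->
  (forall p : 'S_n, exists g, sigma g = p) ->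
  (forall S, wr_abelian_normal mulH oneH invH mulG oneG invG sigma S ->
     forall x, S x -> x.2 = oneG) ->
  R_infty mulG invG ->
  R_infty (wr_mul mulH mulG sigma) (wr_inv invH invG sigma).
Proof.
move=> _ gH abH _ _ gG hsig _ hyp RG.
set M := wr_mul mulH mulG sigma.
set E := wr_one n oneH oneG.
set I := wr_inv invH invG sigma.
have gG' := gG; case: gG' => GA [GL1 [GR1 [GLV GRV]]].
have gH' := gH; case: gH' => HA [HL1 [HR1 [HLV HRV]]].
have sig1 : sigma oneG = 1%g.
  have e := hsig oneG oneG; rewrite GL1 in e.
  by apply: (mulgI (sigma oneG)); rewrite -e mulg1.
have gW : is_group M E I.
  split; [|split; [|split; [|split]]].
  - move=> [a g] [b h] [c k]; rewrite /M /wr_mul /wact /=; congr pair; last exact: GA.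
    apply: functional_extensionality => i; by rewrite HA hsig permM.
  - move=> [b h]; rewrite /M /E /wr_mul /wr_one /wact /=; congr pair; last exact: GL1.
    apply: functional_extensionality => i; by rewrite sig1 perm1 HL1.
  - move=> [b h]; rewrite /M /E /wr_mul /wr_one /wact /=; congr pair; last exact: GR1.
    apply: functional_extensionality => i; by rewrite HR1.
  - move=> [b h]; rewrite /M /E /I /wr_mul /wr_one /wr_inv /wact /=; congr pair; last exact: GLV.
    apply: functional_extensionality => i; by rewrite HLV.
  - move=> [b h]; rewrite /M /E /I /wr_mul /wr_one /wr_inv /wact /=; congr pair; last exact: GRV.
    apply: functional_extensionality => i; by rewrite -[sigma (invG h) (sigma h i)]permM -hsig GRV sig1 perm1 HRV.
have habel : forall x y, x.2 = oneG -> y.2 = oneG -> M x y = M y x.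
  move=> [a g] [b h] /= -> ->; rewrite /M /wr_mul /wact /=; congr pair.
  apply: functional_extensionality => i; by rewrite sig1 perm1 abH.
move=> phi [phim [phis phii]] [l Hl].
have phi1 : phi E = E by exact: (@ag_hom1 _ _ _ _ gW phi phim).
have phiV : forall x, phi (I x) = I (phi x) by exact: (@ag_homV _ _ _ _ gW phi phim).
have invG1 : invG oneG = oneG by apply: (@ag_inv1 _ _ _ _ gG).
have hS : forall x, x.2 = oneG -> (phi x).2 = oneG.
  move=> x hx.
  apply: (hyp (fun y => exists x, x.2 = oneG /\ y = phi x)); last by exists x.
  split; [|split; [|split; [|split]]].
  - by exists E; split => //.
  - move=> _ _ [x1 [h1 ->]] [x2 [h2 ->]]; exists (M x1 x2); split; last by rewrite phim.
    by rewrite /= h1 h2 GL1.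
  - move=> _ [x1 [h1 ->]]; exists (I x1); split; last by rewrite phiV.
    by rewrite /= h1.
  - move=> _ w [x1 [h1 ->]]; have [w' <-] := phis w.
    exists (M (M w' x1) (I w')); split; last by rewrite !phim phiV.
    by rewrite /= h1 GR1 GRV.
  - move=> _ _ [x1 [h1 ->]] [x2 [h2 ->]].
    by rewrite -/M -!phim habel.
pose psi g := (phi (fun _ => oneH, g)).2.
have hpsi : forall x, (phi x).2 = psi x.2.
  move=> [a g].
  have dec : (a, g) = M (a, oneG) (fun _ => oneH, g).
    rewrite /M /wr_mul /wact /=; congr pair; last by rewrite GL1.
    by apply: functional_extensionality => i; rewrite HR1.
  rewrite [in LHS]dec phim.
  change (mulG (phi (a, oneG)).2 (psi g) = psi g).
  by rewrite hS // GL1.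
have psim : forall g h, psi (mulG g h) = mulG (psi g) (psi h).
  move=> g h.
  have := hpsi (M (fun _ => oneH, g) (fun _ => oneH, h)).
  by rewrite phim /= => <-.
have psik : forall k, psi k = oneG -> k = oneG.
  move=> k hk.
  apply: (hyp (fun x => (phi x).2 = oneG) _ (fun _ => oneH, k)) => //.
  split; [|split; [|split; [|split]]].
  - by rewrite phi1.
  - by move=> x y hx hy; rewrite phim /= hx hy GL1.
  - by move=> x hx; rewrite phiV /= hx.
  - by move=> x w hx; rewrite !phim phiV /= hx GR1 GRV.
  - move=> x y hx hy; apply: phii; rewrite !phim habel //.
apply: (RG psi); last first.
  exists (List.map snd l) => g.
  have [y yl [z ez]] := Hl (fun _ => oneH, g).
  exists y.2; first exact: List.in_map.
  exists z.2; have := congr1 snd ez; rewrite /= => ->.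
  by rewrite hpsi.
split => //; split.
  move=> g; have [x ex] := phis (fun _ => oneH, g).
  by exists x.2; rewrite -hpsi ex.
move=> g h e; apply: (@ag_eq_of _ _ _ _ gG); apply: psik.
by rewrite psim (@ag_homV _ _ _ _ gG psi psim) e GRV.
Qed.
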